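(* Let $p,q\in\mathbb{N}$ and let $T=(T_{i,j})_{i,j\in\mathbb{N}_0}$ be a semi-infinite complex matrix with band structure $T_{i,j}=0$ whenever $j<i-p$ or $j>i+q$. For $N\in\mathbb{N}_0$ let $T^{[N]}=(T_{i,j})_{0\le i,j\le N}$ be its principal truncation of size $N+1$. Let $\nu\in\mathbb{C}^{p\times p}$ and $\xi\in\mathbb{C}^{q\times q}$ be invertible lower triangular matrices. Fix $a\in\{1,\dots,p\}$ and $b\in\{1,\dots,q\}$, and define the semi-infinite column vector $u_a^\nu$ whose entries with indices $0,\dots,p-1$ are the entries of $\nu^{-\top}e_a^{[p]}$ and whose remaining entries are $0$, and the semi-infinite row vector $u_b^\xi$ whose entries with indices $0,\dots,q-1$ are the entries of $(e_b^{[q]})^\top\xi^{-1}$ and whose remaining entries are $0$ (here $e_a^{[p]}$, $e_b^{[q]}$ are standard basis vectors of $\mathbb{C}^p$, $\mathbb{C}^q$). Let $e_a^\nu\in\mathbb{C}^{N+1}$ and $e_b^\xi\in\mathbb{C}^{N+1}$ denote the vectors formed by the entries with indices $0,\dots,N$ of $u_a^\nu$ and of $(u_b^\xi)^\top$, respectively. Define \[ d_{b,a}(N)\coloneq\left\lceil\frac{N+2-a}{p}\right\rceil+\left\lceil\frac{N+2-b}{q}\right\rceil-1 . \] Then for every $n\in\mathbb{N}_0$ and every $N\in\mathbb{N}_0$ with $n\le d_{b,a}(N)$, \[ u_b^\xi\,T^n\,u_a^\nu=(e_b^\xi)^\top\bigl(T^{[N]}\bigr)^n e_a^\nu . \]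
   Context: Powers $T^n$ of the banded semi-infinite matrix are defined by ordinary matrix multiplication (all sums involved are finite because of the band structure), with $T^0=I$. Since $\nu$ is lower triangular, $\nu^{-\top}e_a^{[p]}$ is supported in indices $\{0,\dots,a-1\}$, and $(e_b^{[q]})^\top\xi^{-1}$ is supported in indices $\{0,\dots,b-1\}$, so $u_b^\xi T^n u_a^\nu$ is a finite sum. *)

(* Defs.v *)
From HB Require Import structures.
From mathcomp Require Import all_boot all_order all_algebra.
From mathcomp Require Import complex.
From Stdlib Require Rdefinitions.
From mathcomp Require Import Rstruct.
Set Implicit Arguments. Unset Strict Implicit. Unset Printing Implicit Defensive.
Import Order.TTheory GRing.Theory Num.Theory.
Local Open Scope ring_scope.

Notation C := (Rdefinitions.R)[i].

Definition smx := nat -> nat -> C.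

Definition banded (p q : nat) (T : smx) : Prop :=
  forall i j : nat, ((j + p < i)%N \/ (i + q < j)%N) -> T i j = 0.

(* powers of a (q-upper-banded) semi-infinite matrix by ordinary matrix
   multiplication; row i of T vanishes beyond column i+q, so the sum over
   k < i+q+1 is the full (finite) sum.  T^0 = I. *)
Fixpoint spow (q : nat) (T : smx) (n : nat) : smx :=
  match n with
  | 0 => fun i j => (i == j)%:R
  | n'.+1 => fun i j => \sum_(k < i + q + 1) T i k * spow q T n' k j
  end.

Definition trunc (T : smx) (N : nat) : 'M[C]_(N.+1) :=
  \matrix_(i < N.+1, j < N.+1) T i j.

(* semi-infinite vector u_a^nu : entries 0..p-1 are those of nu^{-T} e_a,
   i.e. entry k is (nu^{-1})_{a,k}; other entries are 0.  Same formula gives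
   the row vector u_b^xi : entry k is (e_b^T xi^{-1})_k = (xi^{-1})_{b,k}. *)
Definition uvec (p : nat) (nu : 'M[C]_p) (a : 'I_p) (k : nat) : C :=
  oapp (fun k' : 'I_p => invmx nu a k') 0 (insub k).

Definition vtrunc (u : nat -> C) (N : nat) : 'cV[C]_(N.+1) :=
  \col_(i < N.+1) u i.

Definition ceil_div (x : int) (m : nat) : int := - ((- x) %/ m%:Z)%Z.

(* d_{b,a}(N) = ceil((N+2-a)/p) + ceil((N+2-b)/q) - 1, with a, b 1-based *)
Definition dba (p q : nat) (a b N : nat) : int :=
  ceil_div (N%:Z + 2 - a%:Z) p + ceil_div (N%:Z + 2 - b%:Z) q - 1.

(* Main.v *)
Require Import Defs.
From HB Require Import structures.
From mathcomp Require Import all_boot all_order all_algebra.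
From mathcomp Require Import complex.
From Stdlib Require Rdefinitions.
From mathcomp Require Import Rstruct.
From mathcomp Require Import zify.
Import Order.TTheory GRing.Theory Num.Theory.
Local Open Scope ring_scope.

Lemma ceilK (x : nat) (a p : nat) : (0 < p)%N ->
  ceil_div (x%:Z + 2 - (a.+1)%:Z) p <= (if (a <= x)%N then ((x - a) %/ p).+1 else 0)%N%:Z.
Proof. move=> hp; rewrite /ceil_div.
set y := (- (_ - _))%R.
have e := divz_eq y p.
have hp' : (p%:Z != 0) by rewrite eqz_nat -lt0n.
have hp'' : (0 < p%:Z) by rewrite ltz_nat.
have h1 := modz_ge0 y hp'.
have h2 := ltz_pmod y hp''.
have e2 := divn_eq (x - a) p. have e3 := ltn_pmod (x - a) hp.
move: e h1 h2 e2 e3.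
set d := (y %/ p)%Z. set r := (y %% p)%Z. set k := ((x - a) %/ p)%N.
set s := ((x - a) %% p)%N.
rewrite /y.
case: ifP => h; nia. Qed.

Definition app (q : nat) (T : smx) (v : nat -> C) : nat -> C :=
  fun i => \sum_(k < i + q + 1) T i k * v k.
Definition appN (N : nat) (T : smx) (v : nat -> C) : nat -> C :=
  fun i => \sum_(k < N.+1) T i k * v k.

Lemma sum_ext (f : nat -> C) m m' : (m <= m')%N ->
  (forall k, (m <= k)%N -> (k < m')%N -> f k = 0) ->
  \sum_(k < m) f k = \sum_(k < m') f k.
Proof.
move=> hm hf; rewrite -(big_mkord xpredT f) -(big_mkord xpredT f).
rewrite (big_cat_nat (leq0n m) hm) /= [X in _ = _ + X]big1_seq ?addr0 //.
move=> k /andP[_]; rewrite mem_index_iota => /andP[h1 h2]; exact: hf.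
Qed.

Lemma trig_inv {n} (A : 'M[C]_n) : is_trig_mx A -> A \in unitmx ->
  is_trig_mx (invmx A).
Proof.
move=> tA hU; have hA := elimT is_trig_mxP tA.
have hAB := mulmxV hU. set B := invmx A in hAB *.
have hd : forall k : 'I_n, A k k != 0.
  move=> k; apply/negP => /eqP h0; move: hU.
  by rewrite unitmxE det_trig // (bigD1 k) //= h0 mul0r unitr0.
apply/is_trig_mxP.
suff H : forall m (i j : 'I_n), nat_of_ord i = m -> (i < j)%N -> B i j = 0.
  by move=> i j; apply: H.
elim/ltn_ind => m IH i j him hij.
have := congr1 (fun M : 'M[C]_n => M i j) hAB; rewrite /= !mxE (bigD1 i) //= big1 ?addr0.
  rewrite -val_eqE /= (ltn_eqF hij) /= mulr0n => /eqP; rewrite mulf_eq0 (negbTE (hd i)) /=.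
  by move/eqP.
move=> k hk; case: (ltngtP i k) => h.
- by rewrite hA // mul0r.
- by rewrite (IH k) ?mulr0 // -?him // (ltn_trans h hij).
- by move: hk; rewrite (_ : k = i) ?eqxx //; apply: val_inj.
Qed.

Lemma uvec_supp {p} (nu : 'M[C]_p) (a : 'I_p) : is_trig_mx nu -> nu \in unitmx ->
  forall k, (a < k)%N -> uvec nu a k = 0.
Proof.
move=> t u k hk; rewrite /uvec; case: insubP => [k' _ e|] //=.
by move/is_trig_mxP: (trig_inv _ t u) => h; apply: h; rewrite e.
Qed.

Lemma spow_app {p q} {T : smx} {y : nat -> C} :
  (forall k, (p <= k)%N -> y k = 0) ->
  forall n i, \sum_(j < p) spow q T n i j * y j = iter n (app q T) y i.
Proof.
move=> hy; elim=> [|n IH] i /=.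
  case: (ltnP i p) => hi.
    rewrite (bigD1 (Ordinal hi)) //= eqxx mul1r big1 ?addr0 // => k hk.
    rewrite (_ : (i == k) = false) ?mul0r //; apply/negbTE.
    apply: contra hk => /eqP e; apply/eqP/val_inj; by rewrite /= e.
  rewrite hy // big1 // => k _.
  by rewrite (gtn_eqF (leq_trans (ltn_ord k) hi)) mul0r.
rewrite /app; under eq_bigr do rewrite mulr_suml.
rewrite exchange_big /=; apply eq_bigr => k _; rewrite -IH mulr_sumr.
by apply eq_bigr => j _; rewrite mulrA.
Qed.

Lemma supp_iter {p q} {T : smx} {y : nat -> C} {s} : banded p q T ->
  (forall k, (s < k)%N -> y k = 0) ->
  forall j k, (s + j * p < k)%N -> iter j (app q T) y k = 0.
Proof.
move=> hT hy; elim=> [|j IH] k hk /=.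
  by apply: hy; rewrite mul0n addn0 in hk.
rewrite /app big1 // => l _.
case: (ltnP (s + j * p) l) => hl; first by rewrite IH // mulr0.
rewrite hT ?mul0r //; left; rewrite mulSn in hk; lia.
Qed.

Lemma mx_iter (T : smx) N (v : nat -> C) n :
  (trunc T N) ^+ n *m vtrunc v N = vtrunc (iter n (appN N T) v) N.
Proof.
elim: n => [|n IH].
  rewrite expr0 /=; exact: mul1mx.
rewrite exprS -mulmxE -mulmxA IH; apply/matrixP => i j; rewrite !mxE /appN.
by apply eq_bigr => k _; rewrite !mxE.
Qed.

Lemma agree {p q} {T : smx} {y : nat -> C} {s N K} : banded p q T ->
  (forall k, (s < k)%N -> y k = 0) ->
  (forall j, (j < K)%N -> (s + j * p <= N)%N) ->
  forall j i, (i + (j - K) * q <= N)%N ->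
  iter j (appN N T) y i = iter j (app q T) y i.
Proof.
move=> hT hy hK; elim=> [|j IH] i hi //=.
rewrite /appN /app; case: (ltnP j K) => hjK.
  transitivity (\sum_(k < N.+1) T i k * iter j (app q T) y k).
    apply eq_bigr => k _; rewrite IH //.
    have : (j - K = 0)%N by lia.
    move=> ->; rewrite mul0n addn0; exact: (ltn_ord k).
  transitivity (\sum_(k < N.+1 + (i + q + 1)) T i k * iter j (app q T) y k).
    apply: (sum_ext (fun k => T i k * iter j (app q T) y k)); first lia.
    move=> k h1 h2; rewrite (supp_iter hT hy) ?mulr0 //.
    have := hK j hjK; lia.
  symmetry; apply: (sum_ext (fun k => T i k * iter j (app q T) y k)); first lia.
  by move=> k h1 h2; rewrite hT ?mul0r //; right; lia.
have e : (j.+1 - K = (j - K).+1)%N by lia.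
rewrite e mulSn in hi.
move: hi; set w := ((j - K) * q)%N => hi.
transitivity (\sum_(k < N.+1) T i k * iter j (app q T) y k); last first.
  symmetry; apply: (sum_ext (fun k => T i k * iter j (app q T) y k)); first lia.
  by move=> k h1 h2; rewrite hT ?mul0r //; right; lia.
apply eq_bigr => k _; case: (leqP k (i + q)) => hk.
  rewrite IH //; lia.
by rewrite !hT ?mul0r //; right; lia.
Qed.

(* a, b are 0-based ordinals; the paper's a, b are a.+1, b.+1 *)
Theorem lemma1 (p q : nat) (T : smx) (nu : 'M[C]_p) (xi : 'M[C]_q)
  (a : 'I_p) (b : 'I_q) :
  (0 < p)%N -> (0 < q)%N ->
  banded p q T ->
  is_trig_mx nu -> nu \in unitmx ->
  is_trig_mx xi -> xi \in unitmx ->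
  forall n N : nat, (n%:Z <= dba p q a.+1 b.+1 N)%R ->
  \sum_(i < q) \sum_(j < p) uvec xi b i * spow q T n i j * uvec nu a j
  = (((vtrunc (uvec xi b) N)^T *m (trunc T N) ^+ n *m vtrunc (uvec nu a) N)
       ord0 ord0).
Proof.
move=> hp hq hT tnu unu txi uxi n N hn.
set x := uvec xi b; set y := uvec nu a.
have hy : forall k, (a < k)%N -> y k = 0 by exact: uvec_supp.
have hx : forall k, (b < k)%N -> x k = 0 by exact: uvec_supp.
have hyp : forall k, (p <= k)%N -> y k = 0.
  by move=> k h; apply: hy; exact: (leq_trans (ltn_ord a) h).
set K := (if (a <= N)%N then ((N - a) %/ p).+1 else 0)%N.
set M := (if (b <= N)%N then ((N - b) %/ q).+1 else 0)%N.
have cK := ceilK N a p hp. have cM := ceilK N b q hq.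
rewrite -/K -/M in cK cM.
have hnKM : (n.+1 <= K + M)%N.
  move: hn; rewrite /dba => hn; lia.
have hK : forall j, (j < K)%N -> (a + j * p <= N)%N.
  move=> j; rewrite /K; case: ifP => // h hj.
  have := leq_trunc_div (N - a) p.
  have : (j * p <= (N - a) %/ p * p)%N by rewrite leq_mul2r -ltnS hj orbT.
  lia.
set z := iter n (app q T) y.
transitivity (\sum_(i < q) x i * z i).
  apply eq_bigr => i _; rewrite /z -(spow_app hyp) mulr_sumr.
  by apply eq_bigr => j _; rewrite mulrA.
rewrite -mulmxA mx_iter mxE.
transitivity (\sum_(i < q + N.+1) x i * z i).
  apply: (sum_ext (fun i => x i * z i)); first lia.
  move=> k h1 h2; rewrite hx ?mul0r //; have := ltn_ord b; lia.
symmetry.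
have ag := agree hT hy hK.
case: (ltnP n K) => hnK.
  transitivity (\sum_(i < N.+1) x i * z i).
    apply eq_bigr => i _; rewrite !mxE ag //.
    have -> : (n - K = 0)%N by lia.
    rewrite mul0n addn0; exact: (ltn_ord i).
  apply: (sum_ext (fun i => x i * z i)); first lia.
  move=> k h1 h2; rewrite /z (supp_iter hT hy) ?mulr0 //.
  have := hK n hnK; lia.
have hM : (b <= N)%N /\ ((n - K) * q <= N - b)%N.
  move: hnKM; rewrite /M; case: ifP => hb hnKM; last by lia.
  split => //.
  have := leq_trunc_div (N - b) q.
  have : ((n - K) * q <= (N - b) %/ q * q)%N.
    by rewrite leq_mul2r; apply/orP; right; lia.
  lia.
case: hM => hbN hnq.
transitivity (\sum_(i < N.+1) x i * z i).
  apply eq_bigr => i _; rewrite !mxE.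
  case: (leqP (nat_of_ord i) b) => hib.
    by rewrite ag //; lia.
  by rewrite hx ?mul0r.
apply: (sum_ext (fun i => x i * z i)); first lia.
by move=> k h1 h2; rewrite hx ?mul0r //; lia.
Qed.
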